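(* Consider the standard DC program $(P)$ under Assumption A. Let $\{x^k\}$ and $\{y^k\}$ (with $y^k\in\partial h(x^k)$) be well-defined and bounded sequences generated by DCA for $(P)$ from $x^0\in\operatorname{dom}\partial h$. Suppose that (a) $f$ is continuous on $\operatorname{dom}f$; (b) $f$ satisfies the Łojasiewicz subgradient inequality at every cluster point of $\{x^k\}$; (c) $\rho_g+\rho_h>0$; (d) $h$ is differentiable with locally Lipschitz continuous gradient. Then $\{x^k\}$ converges.
   Context: $\Gamma_0(\mathbb{R}^n)$ is the set of proper, lower semicontinuous, convex functions $\mathbb{R}^n\to(-\infty,\infty]$. Let $g,h\in\Gamma_0(\mathbb{R}^n)$ and $f=g-h$ with convention $\infty-\infty=\infty$. Problem $(P)$: $\inf\{f(x):x\in\mathbb{R}^n\}$. Assumption A: $g,h\in\Gamma_0(\mathbb{R}^n)$ and the solution set of $(P)$ is nonempty. DCA: given $x^0\in\operatorname{dom}\partial h$, for $k=0,1,\dots$ choose $y^k\in\partial h(x^k)$ and $x^{k+1}\in\operatorname{argmin}\{g(x)-\langle y^k,x\rangle: x\in\mathbb{R}^n\}$. Convexity moduli: $\rho_g,\rho_h\ge0$ are constants such that for all $x,z$, all $w\in\partial g(x)$, $v\in\partial h(x)$: $g(z)\ge g(x)+\langle w,z-x\rangle+\frac{\rho_g}{2}\|z-x\|^2$ and $h(z)\ge h(x)+\langle v,z-x\rangle+\frac{\rho_h}{2}\|z-x\|^2$. For a proper lsc $\phi:\mathbb{R}^n\to(-\infty,\infty]$, the Fréchet subdifferential at $x\in\operatorname{dom}\phi$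 is $\partial^F\phi(x)=\{y:\liminf_{z\to x,z\neq x}\frac{\phi(z)-\phi(x)-\langle y,z-x\rangle}{\|z-x\|}\ge0\}$ ($\emptyset$ if $x\notin\operatorname{dom}\phi$), and the limiting subdifferential is $\partial^L\phi(x)=\{y:\exists x^j\to x,\ \phi(x^j)\to\phi(x),\ y^j\in\partial^F\phi(x^j),\ y^j\to y\}$. $\phi$ satisfies the Łojasiewicz subgradient inequality at $x^*$ if there exist $\theta\in[0,1)$, $M>0$ and a neighbourhood $\mathcal V$ of $x^*$ such that $|\phi(x)-\phi(x^* )|^\theta\le M\|y\|$ for all $x\in\mathcal V$ and all $y\in\partial^L\phi(x)$ (convention $0^0=1$). *)

(* Defs.v *)
From HB Require Import structures.
From mathcomp Require Import all_boot all_order all_algebra.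
From mathcomp Require Import all_classical all_reals all_analysis.
Set Implicit Arguments. Unset Strict Implicit. Unset Printing Implicit Defensive.
Import Order.TTheory GRing.Theory Num.Theory.
Import numFieldNormedType.Exports.
Local Open Scope classical_set_scope.
Local Open Scope ring_scope.

Section DC.
Variables (R : realType) (n : nat).
Local Notation vec := 'rV[R]_n.

Definition dot (u v : vec) : R := \sum_(i < n) u ord0 i * v ord0 i.
Definition enorm (u : vec) : R := Num.sqrt (dot u u).

Local Open Scope ereal_scope.

Definition proper_fun (f : vec -> \bar R) : Prop :=
  (forall x, f x != -oo) /\ (exists x, f x < +oo).

Definition convex_fun (f : vec -> \bar R) : Prop :=
  forall (x y : vec) (t : R), (0 < t < 1)%R ->
    f (t *: x + (1 - t) *: y)%R <= t%:E * f x + (1 - t)%:E * f y.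

Definition Gamma0 (f : vec -> \bar R) : Prop :=
  proper_fun f /\ lower_semicontinuous f /\ convex_fun f.

(* f = g - h with the convention +oo - +oo = +oo *)
Definition dcfun (g h : vec -> \bar R) (x : vec) : \bar R :=
  if g x == +oo then +oo else g x - h x.

Definition dom (f : vec -> \bar R) : set vec := [set x | f x < +oo].

Definition csubdiff (f : vec -> \bar R) (x : vec) : set vec :=
  [set v | f x \is a fin_num /\
           forall z, f z >= f x + (dot v (z - x)%R)%:E].

Definition solution_set (f : vec -> \bar R) : set vec :=
  [set xs | forall x, f xs <= f x].

Definition DCA_sequence (g h : vec -> \bar R) (x y : nat -> vec) : Prop :=
  forall k, csubdiff h (x k) (y k) /\
    (forall z, g (x k.+1) - (dot (y k) (x k.+1))%:E <= g z - (dot (y k) z)%:E).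

Definition convexity_modulus (f : vec -> \bar R) (rho : R) : Prop :=
  (0 <= rho)%R /\
  forall x z w, csubdiff f x w ->
    f z >= f x + (dot w (z - x)%R)%:E + (rho / 2 * enorm (z - x)%R ^+ 2)%:E.

Definition bounded_seq (u : nat -> vec) : Prop :=
  exists M : R, forall k, (enorm (u k) <= M)%R.

(* Frechet subdifferential: liminf_{z -> x, z <> x}
   (phi z - phi x - <y, z - x>) / ||z - x|| >= 0 *)
Definition frechet_subdiff (phi : vec -> \bar R) (x : vec) : set vec :=
  [set y | phi x \is a fin_num /\
     forall eps : R, (0 < eps)%R -> exists2 delta : R, (0 < delta)%R &
       forall z, (0 < enorm (z - x) < delta)%R ->
         phi z - phi x - (dot y (z - x)%R)%:E >= (- (eps * enorm (z - x)%R))%:E].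

Definition limiting_subdiff (phi : vec -> \bar R) (x : vec) : set vec :=
  [set y | phi x \is a fin_num /\
     exists (xj yj : nat -> vec),
       [/\ xj @ \oo --> x, (phi \o xj) @ \oo --> phi x,
           (forall j, frechet_subdiff phi (xj j) (yj j)) & yj @ \oo --> y]].

Definition lojasiewicz_at (phi : vec -> \bar R) (xs : vec) : Prop :=
  phi xs \is a fin_num /\
  exists (theta M : R) (V : set vec),
    [/\ (0 <= theta < 1)%R, (0 < M)%R, nbhs xs V &
      forall x y, V x -> limiting_subdiff phi x y ->
        (`| fine (phi x) - fine (phi xs) | `^ theta <= M * enorm y)%R].

Definition cluster_point (u : nat -> vec) (xs : vec) : Prop :=
  forall (eps : R) (N : nat), (0 < eps)%R ->
    exists2 k, (N <= k)%N & (enorm (u k - xs) < eps)%R.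

Definition diff_loclip_grad (h : vec -> \bar R) : Prop :=
  exists grad : vec -> vec,
    (forall x, h x \is a fin_num) /\
    (forall x (eps : R), (0 < eps)%R -> exists2 delta : R, (0 < delta)%R &
       forall z, (enorm (z - x) < delta)%R ->
         (`| fine (h z) - fine (h x) - dot (grad x) (z - x) |
            <= eps * enorm (z - x))%R) /\
    (forall x, exists2 r : R, (0 < r)%R & exists L : R,
       forall u v, (enorm (u - x) < r)%R -> (enorm (v - x) < r)%R ->
         (enorm (grad u - grad v) <= L * enorm (u - v))%R).

End DC.

(* Main.v *)
Require Import Defs.
From HB Require Import structures.
From mathcomp Require Import all_boot all_order all_algebra.
From mathcomp Require Import all_classical all_reals all_analysis.
From mathcomp Require Import ring lra zify.
Import Order.TTheory GRing.Theory Num.Theory.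
Import numFieldNormedType.Exports.
Local Open Scope classical_set_scope.
Local Open Scope ring_scope.



Lemma dotBl {R : realType} {n : nat} (a : 'rV[R]_n) (b : 'rV[R]_n) (v : 'rV[R]_n) : dot (a - b) v = dot a v - dot b v.
Proof.
rewrite /dot -sumrB; apply: eq_bigr => i _; rewrite !mxE; ring.
Qed.

Lemma dotBr {R : realType} {n : nat} (u : 'rV[R]_n) (a : 'rV[R]_n) (b : 'rV[R]_n) : dot u (a - b) = dot u a - dot u b.
Proof.
rewrite /dot -sumrB; apply: eq_bigr => i _; rewrite !mxE; ring.
Qed.

Lemma dotZr {R : realType} {n : nat} (u : 'rV[R]_n) (t : R) (v : 'rV[R]_n) : dot u (t *: v) = t * dot u v.
Proof.
rewrite /dot mulr_sumr; apply: eq_bigr => i _; rewrite !mxE; ring.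
Qed.

Lemma dotZl {R : realType} {n : nat} (u : 'rV[R]_n) (t : R) (v : 'rV[R]_n) : dot (t *: v) u = t * dot v u.
Proof.
rewrite /dot mulr_sumr; apply: eq_bigr => i _; rewrite !mxE; ring.
Qed.

Lemma dot_ge0 {R : realType} {n : nat} (u : 'rV[R]_n) : 0 <= dot u u.
Proof. by apply: sumr_ge0 => i _; rewrite -expr2 sqr_ge0. Qed.

Lemma dot_eq0 {R : realType} {n : nat} (u : 'rV[R]_n) : dot u u = 0 -> u = 0.
Proof.
move=> /eqP; rewrite psumr_eq0; last by move=> i _; rewrite -expr2 sqr_ge0.
move=> /allP H; apply/rowP => i; rewrite mxE.
have := H i (mem_index_enum i); rewrite -expr2 sqrf_eq0 => /eqP.
by [].
Qed.

Lemma enorm_ge0 {R : realType} {n : nat} (u : 'rV[R]_n) : 0 <= enorm u.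
Proof. exact: sqrtr_ge0. Qed.

Lemma enorm_sqr {R : realType} {n : nat} (u : 'rV[R]_n) : enorm u ^+ 2 = dot u u.
Proof. by rewrite sqr_sqrtr // dot_ge0. Qed.

Lemma dotNN {R : realType} {n : nat} (u : 'rV[R]_n) : dot (- u) (- u) = dot u u.
Proof. by rewrite /dot; apply: eq_bigr => i _; rewrite !mxE mulrNN. Qed.

Lemma enormN {R : realType} {n : nat} (u : 'rV[R]_n) : enorm (- u) = enorm u.
Proof. by rewrite /enorm dotNN. Qed.

Lemma enormB {R : realType} {n : nat} (a : 'rV[R]_n) (b : 'rV[R]_n) : enorm (a - b) = enorm (b - a).
Proof. by rewrite -enormN opprB. Qed.

Lemma enormZ {R : realType} {n : nat} (t : R) (u : 'rV[R]_n) : enorm (t *: u) = `|t| * enorm u.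
Proof.
rewrite /enorm dotZl dotZr mulrA -expr2 sqrtrM ?sqr_ge0 //.
by rewrite sqrtr_sqr.
Qed.

Lemma enorm_eq0 {R : realType} {n : nat} (u : 'rV[R]_n) : enorm u = 0 -> u = 0.
Proof.
move=> H; apply: dot_eq0; by rewrite -enorm_sqr H expr0n.
Qed.

Lemma coord_le_enorm {R : realType} {n : nat} (u : 'rV[R]_n) (i : 'I_n) : `|u ord0 i| <= enorm u.
Proof.
rewrite -sqrtr_sqr /enorm ler_sqrt ?dot_ge0 //.
rewrite /dot (bigD1 i) //= -expr2 lerDl.
by apply: sumr_ge0 => j _; rewrite -expr2 sqr_ge0.
Qed.

Lemma coord_le_mxnorm {R : realType} {n : nat} (u : 'rV[R]_n) (i : 'I_n) : `|u ord0 i| <= `|u|.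
Proof.
rewrite [leRHS]/Num.norm /= mx_normrE.
by apply/bigmax_geP; right => /=; exists (ord0, i).
Qed.

Lemma mxnorm_le_enorm {R : realType} {n : nat} (u : 'rV[R]_n) : `|u| <= enorm u.
Proof.
rewrite [leLHS]/Num.norm /= mx_normrE.
apply/bigmax_leP; split; first exact: enorm_ge0.
move=> [i j] _ /=; rewrite (ord1 i); exact: coord_le_enorm.
Qed.

Lemma enorm_le_mxnorm {R : realType} {n : nat} (u : 'rV[R]_n) : enorm u <= n.+1%:R * `|u|.
Proof.
have h0 : 0 <= `|u| by [].
rewrite -[n.+1%:R * _]ger0_norm ?mulr_ge0 // -sqrtr_sqr /enorm ler_sqrt ?sqr_ge0 //.
apply: (@le_trans _ _ (\sum_(i < n) `|u|^+2)).
  apply: ler_sum => i _; rewrite -expr2 -real_normK ?num_real //.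
  by rewrite lerXn2r ?nnegrE // coord_le_mxnorm.
rewrite sumr_const card_ord -[leLHS]mulr_natl exprMn.
apply: ler_wpM2r; first by rewrite sqr_ge0.
rewrite expr2 -natrM ler_nat; nia.
Qed.



Lemma young {R : realType} (t a b : R) : 0 <= t < 1 -> 0 <= a -> 0 <= b ->
  a `^ t * b `^ (1 - t) <= t * a + (1 - t) * b.
Proof.
move=> /andP[t0 t1] a0 b0.
have [->|tn0] := eqVneq t 0.
  by rewrite powRr0 subr0 powRr1 // mul1r mul0r add0r.
have tp : 0 < t by rewrite lt_neqAle eq_sym tn0.
have t1p : 0 < 1 - t by rewrite subr_gt0.
have := @conjugate_powR R (a `^ t) (b `^ (1 - t)) t^-1 (1 - t)^-1
  (powR_ge0 _ _) (powR_ge0 _ _) (ltac:(by rewrite invr_gt0)) (ltac:(by rewrite invr_gt0)).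
rewrite !invrK -powRrM -powRrM mulfV ?gt_eqF // mulfV ?gt_eqF //.
rewrite !powRr1 // => H.
suff: t + (1 - t) = 1 by move=> /H; rewrite ![_ * t]mulrC ![_ * (1 - t)]mulrC.
by rewrite addrC subrK.
Qed.

Lemma KL_len {R : realType} (F D P : nat -> R) (Fs c C t d : R) :
  0 < c -> 0 <= C -> 0 <= t < 1 -> 0 < d ->
  (forall k, 0 <= D k) ->
  (forall k, (1 <= k)%N -> Fs <= F k) ->
  (forall k, (1 <= k)%N -> F k.+1 + c * D k ^+ 2 <= F k) ->
  (forall k, P k.+1 <= P k + D k) -> (forall k, P k <= P k.+1 + D k) ->
  (forall k, (2 <= k)%N -> P k.-1 < d -> P k < d ->
     (F k - Fs) `^ t <= C * D k.-1) ->
  (forall e N, 0 < e -> exists2 k, (N <= k)%N & P k < e) ->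
  (forall e, 0 < e -> exists2 k, (1 <= k)%N & F k - Fs < e) ->
  exists K B, forall k, \sum_(K <= j < k) D j <= B.
Proof.
move=> c0 C0 /andP[t0 t1] d0 D0 Fge desc Pup Pdn loc clus small.
set r := fun k => F k - Fs.
set phi := fun s : R => s `^ (1 - t).
have t1p : 0 < 1 - t by rewrite subr_gt0.
have r0 k : (1 <= k)%N -> 0 <= r k by move=> /Fge; rewrite /r subr_ge0.
have Dk2 k : (1 <= k)%N -> c * D k ^+ 2 <= r k - r k.+1.
  move=> /desc; rewrite /r; lra.
have rdec k : (1 <= k)%N -> r k.+1 <= r k.
  move=> /[dup] /Dk2 H _; have : 0 <= c * D k ^+ 2 by rewrite mulr_ge0 ?sqr_ge0 ?ltW.
  lra.
have rmono i j : (1 <= i)%N -> (i <= j)%N -> r j <= r i.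
  move=> i1; elim: j => [|j IH]; first by rewrite leqn0 => /eqP ->.
  rewrite leq_eqVlt => /orP[/eqP->//|]; rewrite ltnS => ij.
  by apply: le_trans (IH ij); apply: rdec; apply: leq_trans ij.
have phi0 s : 0 <= phi s by apply: powR_ge0.
have phimono x y : 0 <= x -> x <= y -> phi x <= phi y.
  move=> x0 xy; apply: ge0_ler_powR => //; first exact: ltW.
  by rewrite nnegrE (le_trans x0 xy).
set C' := C / (c * (1 - t)).
have C'0 : 0 <= C' by rewrite divr_ge0 // mulr_ge0 // ltW.
have step k : (2 <= k)%N -> P k.-1 < d -> P k < d ->
    2 * D k <= D k.-1 + C' * (phi (r k) - phi (r k.+1)).
  move=> k2 Pk1 Pk.
  have k1 : (1 <= k)%N by apply: leq_trans k2.
  have L := loc k k2 Pk1 Pk.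
  have Y := young t (r k) (r k.+1) (ltac:(by apply/andP)) (r0 k k1) (r0 k.+1 isT).
  have rk : r k = r k `^ t * phi (r k).
    rewrite /phi -powRD; last by rewrite addrC subrK oner_eq0.
    by rewrite addrC subrK powRr1 // r0.
  have ph := phimono _ _ (r0 k.+1 isT) (rdec k k1).
  have E1 : (1 - t) * (r k - r k.+1) <= r k `^ t * (phi (r k) - phi (r k.+1)).
    have Y' : r k `^ t * phi (r k.+1) <= t * r k + (1 - t) * r k.+1 := Y.
    rewrite [leRHS]mulrBr -rk; move: Y'.
    nra.
  have E2 : r k `^ t * (phi (r k) - phi (r k.+1)) <=
            C * D k.-1 * (phi (r k) - phi (r k.+1)).
    by apply: ler_wpM2r => //; rewrite subr_ge0.
  have E3 : c * (1 - t) * D k ^+ 2 <= (1 - t) * (r k - r k.+1).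
    have := Dk2 k k1; nra.
  have E4 : D k ^+ 2 <= D k.-1 * (C' * (phi (r k) - phi (r k.+1))).
    have cp : 0 < c * (1 - t) by rewrite mulr_gt0.
    have -> : D k.-1 * (C' * (phi (r k) - phi (r k.+1))) =
      C * D k.-1 * (phi (r k) - phi (r k.+1)) / (c * (1 - t)).
      by rewrite /C'; field; rewrite !gt_eqF.
    rewrite ler_pdivlMr // mulrC; apply: (le_trans E3); exact: (le_trans E1).
  have Dk0 := D0 k; have Dk10 := D0 k.-1.
  have b0 : 0 <= C' * (phi (r k) - phi (r k.+1)) by rewrite mulr_ge0 // subr_ge0.
  move: E4 b0; set bb := C' * _; move=> E4 b0.
  have h1 : 0 <= (D k.-1 - bb) ^+ 2 := sqr_ge0 _.
  rewrite leNgt; apply/negP => H.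
  have : (D k.-1 + bb) ^+ 2 < (2 * D k) ^+ 2.
    rewrite ltr_pXn2r // nnegrE; [exact: addr_ge0 | exact: mulr_ge0].
  nra.
have d3 : 0 < d / 3 by rewrite divr_gt0.
set e1 := c * (d / 3) ^+ 2.
set q := d / 3 / (C' + 1).
have q0 : 0 < q by rewrite divr_gt0 // ltr_pwDr.
set e2 := q `^ (1 - t)^-1.
have e10 : 0 < e1 by rewrite mulr_gt0 // exprn_gt0.
have e20 : 0 < e2 by apply: powR_gt0.
have [k0 k01 rk0] := small (Num.min e1 e2) (ltac:(by rewrite lt_min e10 e20)).
have [K KN PK] := clus (d / 3) k0.+1 d3.
have K1 : (1 <= K.-1)%N by rewrite -ltnS prednK //; apply: leq_trans KN; rewrite ltnS.
have K2 : (2 <= K)%N by apply: leq_trans KN; rewrite ltnS.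
have rK1 : r K.-1 < Num.min e1 e2.
  apply: le_lt_trans rk0; apply: rmono => //; rewrite -ltnS prednK //.
  by apply: leq_trans K2.
have DK1 : D K.-1 < d / 3.
  have := Dk2 _ K1; rewrite prednK; last by apply: leq_trans K2.
  have := r0 K (leq_trans _ K2); move=> /(_ isT) rK0.
  move: rK1; rewrite lt_min => /andP[rK1 _] H.
  have H2 : c * D K.-1 ^+ 2 < c * (d / 3) ^+ 2 by rewrite -/e1; lra.
  rewrite ltr_pM2l // in H2.
  by rewrite -(ltr_pXn2r (n:=2)) // ?nnegrE // ltW.
have phiK : C' * phi (r K) <= d / 3.
  have rK0 : 0 <= r K by apply: r0; apply: leq_trans K2.
  have rKe2 : r K <= e2.
    have := rdec K.-1 K1; rewrite prednK; last by apply: leq_trans K2.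
    move=> H; apply: (le_trans H).
    by move: rK1; rewrite lt_min => /andP[_ /ltW].
  have H : phi (r K) <= q.
    have := phimono _ _ rK0 rKe2; rewrite {2}/phi /e2 -powRrM mulVf ?gt_eqF //.
    by rewrite powRr1 // ltW.
  apply: (le_trans (ler_wpM2l C'0 H)).
  have -> : d / 3 = (C' + 1) * q.
    by rewrite /q; field; rewrite gt_eqF // ltr_pwDr.
  by apply: ler_wpM2r; [exact: ltW | rewrite lerDl].
set Q0 := D K.-1 + C' * phi (r K).
have PQ : P K + Q0 < d by rewrite /Q0; lra.
have Q00 : 0 <= Q0 by rewrite addr_ge0 // mulr_ge0.
set S := fun m => \sum_(K <= j < K + m) D j.
have S0 m : 0 <= S m by apply: sumr_ge0.
have Srec m : S m.+1 = S m + D (K + m)%N.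
  by rewrite /S addnS big_nat_recr //= leq_addr.
have Pb m : P (K + m)%N <= P K + S m.
  elim: m => [|m IH]; first by rewrite /S !addn0 big_geq // addr0.
  rewrite addnS Srec; apply: (le_trans (Pup _)); lra.
have claim m : S m + D (K + m)%N.-1 + C' * phi (r (K + m)%N) <= Q0.
  elim: m => [|m IH].
    by rewrite /S addn0 big_geq // add0r.
  have PKm : P (K + m) < d.
    have := Pb m; have : C' * phi (r (K + m)) >= 0 by rewrite mulr_ge0.
    have := D0 (K + m).-1; lra.
  have PKm1 : P (K + m).-1 < d.
    case: m IH PKm => [|m] IH PKm.
      rewrite addn0; have := Pdn K.-1; rewrite prednK; last by apply: leq_trans K2.
      have : C' * phi (r K) >= 0 by rewrite mulr_ge0.
      rewrite /Q0 in PQ; lra.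
    rewrite addnS /=; have := Pb m; have := Srec m.
    have : C' * phi (r (K + m.+1)) >= 0 by rewrite mulr_ge0.
    have := D0 (K + m); have := D0 (K + m.+1).-1; lra.
  have := step (K + m) (leq_trans K2 (leq_addr _ _)) PKm1 PKm.
  rewrite Srec addnS /=.
  move: IH; lra.
exists K, Q0 => k.
have [kK|Kk] := leqP k K; first by rewrite big_geq.
have := claim (k - K)%N; rewrite subnKC; last exact: ltnW.
have := D0 k.-1; have : C' * phi (r k) >= 0 by rewrite mulr_ge0.
rewrite /S subnKC; last exact: ltnW.
lra.
Qed.


Lemma subgrad_eq_grad (R : realType) (n : nat) (h : 'rV[R]_n -> \bar R)
  (grad : 'rV[R]_n -> 'rV[R]_n) p v :
  (forall x, h x \is a fin_num) ->
  (forall x (eps : R), 0 < eps -> exists2 delta : R, 0 < delta &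
       forall z, enorm (z - x) < delta ->
         `| fine (h z) - fine (h x) - dot (grad x) (z - x) |
            <= eps * enorm (z - x)) ->
  csubdiff h p v -> v = grad p.
Proof.
move=> hfin hdiff [_ hsub].
set w := v - grad p.
suff : w = 0 by move/eqP; rewrite subr_eq0 => /eqP.
have [//|wn0] := eqVneq w 0.
have wp : 0 < enorm w.
  rewrite lt_neqAle enorm_ge0 andbT; apply/eqP => /esym /enorm_eq0.
  by move/eqP; rewrite (negbTE wn0).
have [delta dp Hd] := hdiff p (enorm w / 2) (ltac:(by rewrite divr_gt0)).
set t := delta / (2 * enorm w).
have tp : 0 < t by rewrite divr_gt0 // mulr_gt0.
set z := p + t *: w.
have zp : z - p = t *: w by rewrite /z addrAC subrr add0r.
have ez : enorm (z - p) = t * enorm w by rewrite zp enormZ gtr0_norm.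
have etw : t * enorm w = delta / 2.
  by rewrite /t; field; rewrite gt_eqF.
have := Hd z; rewrite ez etw; move=> /(_ ltac:(lra)).
move: (hsub z); rewrite -(fineK (hfin z)) -(fineK (hfin p)) -EFinD lee_fin zp.
rewrite !dotZr => H1 /ler_normlP [_ H2].
have E : dot v w - dot (grad p) w = enorm w ^+ 2 by rewrite -dotBl enorm_sqr.
have : t * enorm w ^+ 2 <= (enorm w / 2) * (t * enorm w).
  rewrite -E mulrBr; move: H1 H2; rewrite etw; lra.
have : 0 < t * enorm w ^+ 2 by rewrite mulr_gt0 // exprn_gt0.
move=> h1 h2; exfalso; nra.
Qed.

Theorem theorem4 (R : realType) (n : nat)
  (g h : 'rV[R]_n -> \bar R) (rho_g rho_h : R)
  (x y : nat -> 'rV[R]_n) :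
  Gamma0 g -> Gamma0 h ->
  solution_set (dcfun g h) !=set0 ->
  DCA_sequence g h x y ->
  bounded_seq x -> bounded_seq y ->
  convexity_modulus g rho_g -> convexity_modulus h rho_h ->
  {within dom (dcfun g h), continuous (dcfun g h)} ->
  (forall xs, cluster_point x xs -> lojasiewicz_at (dcfun g h) xs) ->
  0 < rho_g + rho_h ->
  diff_loclip_grad h ->
  exists l : 'rV[R]_n, x @ \oo --> l.
Proof.
move=> [[gnoo [z0 gz0]] _] _ _ dca [Mx xbd] _ [_ modg] [_ modh] fcont loj rho0
  [grad [hfin [hdiff hlip]]].
set f := dcfun g h.
set H := fun z => fine (h z).
have hE z : h z = (H z)%:E by rewrite fineK.
have gsub k : csubdiff g (x k.+1) (y k).
  have D := (dca k).2.
  have gfin : g (x k.+1) \is a fin_num.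
    rewrite fin_numE gnoo /=; apply/negP => /eqP E.
    move: (D z0); rewrite E /=.
    by move: gz0; case: (g z0) => [r||].
  split => // z; move: (D z); rewrite -(fineK gfin).
  move: (gnoo z); case: (g z) => [r||] //= _ D'; last exact: leey.
  move: D'; rewrite -!EFinD !lee_fin dotBr; lra.
set G := fun k => fine (g (x k)).
have gfin k : (1 <= k)%N -> g (x k) \is a fin_num.
  by case: k => // k _; case: (gsub k).
have gE k : (1 <= k)%N -> g (x k) = (G k)%:E by move=> /gfin; rewrite /G => /fineK.
have ygrad k : y k = grad (x k) := @subgrad_eq_grad R n h grad (x k) (y k) hfin hdiff (dca k).1.
set F := fun k => G k - H (x k).
have fgE z r : g z = r%:E -> f z = (r - H z)%:E.
  by move=> E; rewrite /f /dcfun E /= hE.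
have fE k : (1 <= k)%N -> f (x k) = (F k)%:E by move=> /gE /fgE.
set D := fun k => enorm (x k.+1 - x k).
set c := (rho_g + rho_h) / 2.
have c0 : 0 < c by rewrite divr_gt0.
have desc k : (1 <= k)%N -> F k.+1 + c * D k ^+ 2 <= F k.
  move=> k1.
  have Hg := modg (x k.+1) (x k) (y k) (gsub k).
  have Hh := modh (x k) (x k.+1) (y k) (dca k).1.
  rewrite (gE _ k1) (gE k.+1 isT) -!EFinD lee_fin in Hg.
  rewrite !hE -!EFinD lee_fin in Hh.
  rewrite enormB -/(D k) in Hg; rewrite -/(D k) in Hh.
  have : dot (y k) (x k - x k.+1) = - dot (y k) (x k.+1 - x k).
    by rewrite !dotBr opprB.
  have : c * D k ^+ 2 = rho_g / 2 * D k ^+ 2 + rho_h / 2 * D k ^+ 2.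
    by rewrite /c; ring.
  rewrite /F; lra.
have lsub k : limiting_subdiff f (x k.+1) (y k - grad (x k.+1)).
  split; first by rewrite fE.
  exists (fun=> x k.+1), (fun=> y k - grad (x k.+1)); split.
  - exact: cvg_cst.
  - exact: cvg_cst.
  - move=> _; split; first by rewrite fE.
    move=> eps e0; have [d d0 Hd] := hdiff (x k.+1) eps e0.
    exists d => // z /andP[_ zd].
    have := Hd z zd; rewrite (fE k.+1 isT).
    move: (gnoo z); case E: (g z) => [r| |] // _.
      rewrite (fgE z r E) -!EFinB lee_fin => /ler_normlP [_ H2].
      have := (gsub k).2 z; rewrite E (gE k.+1 isT) -EFinD lee_fin => H1.
      rewrite dotBl; rewrite /F /H in H1 H2 *; lra.
    by move=> _; rewrite /f /dcfun E /= leey.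
  - exact: cvg_cst.
have Mx0 : 0 < Mx + 1.
  by have := xbd 0%N; have := enorm_ge0 (x 0%N); lra.
have [xs clx] : exists xs, cluster_point x xs.
  set A := closed_ball (0 : 'rV[R]_n) (Mx + 1).
  have cA : compact A.
    apply: bounded_closed_compact; last exact: closed_ball_closed.
    exists (Mx + 1); split; first exact: num_real.
    move=> M HM v; rewrite /A closed_ballE // /closed_ball_ /= sub0r normrN.
    move=> Hv; exact: (le_trans Hv (ltW HM)).
  have FA : (x @ \oo) A.
    exists 0%N => // k _; rewrite /A closed_ballE // /closed_ball_ /= sub0r normrN.
    by apply: (le_trans (mxnorm_le_enorm _)); have := xbd k; lra.
  have [xs [_ clxs]] := cA _ _ FA.
  exists xs => eps N e0.
  have np : 0 < n.+1%:R :> R by [].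
  have B := nbhsx_ballx xs (eps / n.+1%:R) (divr_gt0 e0 np).
  have FA' : (x @ \oo) [set v | exists2 k, (N <= k)%N & v = x k].
    by exists N => // k /= Nk; exists k.
  have [v [[k Nk ->] Bk]] := clxs _ _ FA' B.
  exists k => //.
  move: Bk; rewrite -ball_normE /ball_ /= distrC => Bk.
  apply: (le_lt_trans (enorm_le_mxnorm _)).
  by rewrite mulrC -ltr_pdivlMr.
have [fxsfin [th [M [V [/andP[th0 th1] M0 NV Lj]]]]] := loj xs clx.
rewrite -/f in fxsfin Lj.
set Fs := fine (f xs).
have fxsE : f xs = Fs%:E by rewrite fineK.
have domxs : dom f xs by change (f xs < +oo)%E; rewrite fxsE ltry.
have cf : f @ within (dom f) (nbhs xs) --> Fs%:E.
  rewrite -fxsE; exact: (subspace_continuousP _ _).1 fcont xs domxs.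
have cont e : 0 < e -> exists2 t, 0 < t & forall z, `|xs - z| < t -> dom f z ->
    `|Fs - fine (f z)| < e.
  move=> e0.
  have [_ cf'] := (fine_cvgP _ _).1 cf.
  have := (cvgrPdist_lt _ _).1 cf' e e0.
  move=> /(_ (within_filter _ _)) Hn; have [t t0 Ht] := (nbhs_ballP xs _).1 Hn.
  exists t => // z zt dz.
  apply: (Ht z) => //; by rewrite -ball_normE /ball_.
have D0 k : 0 <= D k by apply: enorm_ge0.
have Fmono i j : (1 <= i)%N -> (i <= j)%N -> F j <= F i.
  move=> i1; elim: j => [|j IH]; first by rewrite leqn0 => /eqP ->.
  rewrite leq_eqVlt => /orP[/eqP->//|]; rewrite ltnS => ij.
  apply: le_trans (IH ij); have := desc j (leq_trans i1 ij).
  have : 0 <= c * D j ^+ 2 by rewrite mulr_ge0 ?sqr_ge0 ?ltW.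
  lra.
have domx k : (1 <= k)%N -> dom f (x k).
  by move=> k1; change (f (x k) < +oo)%E; rewrite fE // ltry.
have Pxe z : `|xs - z| <= enorm (z - xs).
  by rewrite distrC; apply: mxnorm_le_enorm.
have Fge k : (1 <= k)%N -> Fs <= F k.
  move=> k1; rewrite leNgt; apply/negP => Hlt.
  have e0 : 0 < Fs - F k by rewrite subr_gt0.
  have [t t0 Ht] := cont _ e0.
  have [j kj Hj] := clx t k t0.
  have := Ht (x j) (le_lt_trans (Pxe _) Hj) (domx j (leq_trans k1 kj)).
  rewrite fE ?(leq_trans k1 kj) //= ltr_norml => /andP[_ H2].
  have := Fmono k j k1 kj; lra.
have small e : 0 < e -> exists2 k, (1 <= k)%N & F k - Fs < e.
  move=> e0; have [t t0 Ht] := cont _ e0.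
  have [j j1 Hj] := clx t 1%N t0.
  exists j => //.
  have := Ht (x j) (le_lt_trans (Pxe _) Hj) (domx j j1).
  rewrite fE //= ltr_norml => /andP[H1 _]; lra.
set P := fun k => `|x k - xs|.
have Pup k : P k.+1 <= P k + D k.
  rewrite /P /D; have -> : x k.+1 - xs = (x k.+1 - x k) + (x k - xs).
    by rewrite addrA subrK.
  apply: (le_trans (ler_normD _ _)); rewrite addrC.
  apply: lerD => //; exact: mxnorm_le_enorm.
have Pdn k : P k <= P k.+1 + D k.
  rewrite /P /D; have -> : x k - xs = (x k.+1 - xs) + (x k - x k.+1).
    by rewrite [RHS]addrC addrA subrK.
  apply: (le_trans (ler_normD _ _)); apply: lerD => //.
  by rewrite distrC; exact: mxnorm_le_enorm.
have [rL rL0 [L HL]] := hlip xs.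
have [dV dV0 HV] := (nbhs_ballP xs V).1 NV.
have np : 0 < n.+1%:R :> R by [].
set del := Num.min dV (rL / n.+1%:R).
have del0 : 0 < del by rewrite lt_min dV0 divr_gt0.
set C := M * Num.max L 0.
have C0 : 0 <= C by apply: mulr_ge0; [exact: ltW | rewrite le_max lexx orbT].
have loc k : (2 <= k)%N -> P k.-1 < del -> P k < del ->
    (F k - Fs) `^ th <= C * D k.-1.
  case: k => [//|k] k2 /= Pk1 Pk.
  have k1 : (1 <= k)%N by [].
  have Vx : V (x k.+1).
    apply: HV; rewrite -ball_normE /ball_ /= distrC.
    by apply: (lt_le_trans Pk); rewrite ge_min lexx.
  have := Lj (x k.+1) _ Vx (lsub k).
  rewrite fE //= ger0_norm ?subr_ge0 ?Fge // -/Fs => H1.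
  apply: (le_trans H1); rewrite /C -mulrA ler_pM2l //.
  rewrite ygrad.
  have inr z : P z < del -> enorm (x z - xs) < rL.
    move=> Pz; apply: (le_lt_trans (enorm_le_mxnorm _)).
    rewrite mulrC -ltr_pdivlMr //; apply: (lt_le_trans Pz).
    by rewrite ge_min lexx orbT.
  apply: (le_trans (HL _ _ (inr _ Pk1) (inr _ Pk))).
  rewrite enormB -/(D k); apply: ler_wpM2r => //.
  by rewrite le_max lexx.
have clus e N : 0 < e -> exists2 k, (N <= k)%N & P k < e.
  move=> e0; have [k Nk Hk] := clx e N e0; exists k => //.
  by apply: le_lt_trans Hk; rewrite /P distrC Pxe.
have [K [B HB]] := @KL_len R F D P Fs c C th del c0 C0 (ltac:(by rewrite th0 th1)) del0 D0 Fge desc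
  Pup Pdn loc clus small.
have dist j m : `|x (j + m)%N - x j| <= \sum_(j <= i < j + m) D i.
  elim: m => [|m IH]; first by rewrite addn0 subrr normr0 big_geq.
  rewrite addnS big_nat_recr /= ?leq_addr //.
  have -> : x (j + m).+1 - x j = (x (j + m).+1 - x (j + m)%N) + (x (j + m)%N - x j).
    by rewrite addrA subrK.
  apply: (le_trans (ler_normD _ _)); rewrite addrC; apply: lerD => //.
  exact: mxnorm_le_enorm.
set T := fun k => \sum_(K <= j < k) D j.
have Tsplit a b : (K <= a)%N -> (a <= b)%N -> T b = T a + \sum_(a <= j < b) D j.
  by move=> Ka ab; rewrite /T -big_cat_nat.
have Tle a b : (a <= b)%N -> T a <= T b.
  move=> ab; have [Ka|aK] := leqP K a.
    by rewrite (Tsplit a b) // lerDl; apply: sumr_ge0.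
  have -> : T a = 0 by rewrite /T big_geq // ltnW.
  by apply: sumr_ge0.
pose E := range T.
have hs : has_sup E.
  split; first by exists (T 0%N), 0%N.
  by exists B => _ [k _ <-]; apply: HB.
pose s := sup E.
have cx : cauchy (x @ \oo).
  apply: cauchy_exP => e e0.
  have [_ [k _ <-] Hk] := sup_adherent e0 hs.
  pose N := maxn k K.
  exists (x N); exists N => // m Nm.
  rewrite /= -ball_normE /ball_ /= distrC.
  have := dist N (m - N)%N; rewrite subnKC // => H1.
  apply: (le_lt_trans H1).
  have := Tsplit N m (leq_maxr _ _) Nm.
  have := Tle k N (leq_maxl _ _).
  have : T m <= s by apply: sup_upper_bound => //; exists m.
  rewrite -/s in Hk; lra.
exists (lim (x @ \oo)); exact: cauchy_cvg.
Qed.
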